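(* Let $X$ be an uncountable set and let $\ell_\infty(X)$ be the space of all bounded functions $f:X\to\mathbb{R}$. Then there exists no reproducing kernel Hilbert space $H$ of functions on $X$ such that $\ell_\infty(X)\subset H$.
   Context: A reproducing kernel Hilbert space (RKHS) on a set $X$ is a Hilbert space $H$ consisting of real-valued functions $f:X\to\mathbb{R}$ (with the pointwise vector space operations) such that for every $x\in X$ the point evaluation $f\mapsto f(x)$ is a continuous linear functional on $H$; equivalently, $H$ has a reproducing kernel $k:X\times X\to\mathbb{R}$ with $k(\cdot,x)\in H$ and $f(x)=\langle f,k(\cdot,x)\rangle_H$ for all $f\in H$, $x\in X$. The inclusion $\ell_\infty(X)\subset H$ is meant as sets of functions on $X$. *)

(* Defs.v *)
From Stdlib Require Import Reals.
Open Scope R_scope.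

Definition bounded_fun {X : Type} (f : X -> R) : Prop :=
  exists M : R, forall x, Rabs (f x) <= M.

Definition countable_type (X : Type) : Prop :=
  exists c : X -> nat, forall x y, c x = c y -> x = y.

Definition ip_norm {X : Type} (ip : (X -> R) -> (X -> R) -> R) (f : X -> R) : R :=
  sqrt (ip f f).

Definition fsub {X : Type} (f g : X -> R) : X -> R := fun x => f x - g x.

(* H (a set of functions X -> R, with pointwise vector operations) together
   with ip is a real Hilbert space whose point evaluations are continuous,
   i.e. a reproducing kernel Hilbert space on X. *)
Record is_RKHS (X : Type) (H : (X -> R) -> Prop)
    (ip : (X -> R) -> (X -> R) -> R) : Prop := {
  rkhs_zero : H (fun _ => 0);
  rkhs_add : forall f g, H f -> H g -> H (fun x => f x + g x);
  rkhs_scal : forall (a : R) f, H f -> H (fun x => a * f x);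
  rkhs_ip_sym : forall f g, H f -> H g -> ip f g = ip g f;
  rkhs_ip_add : forall f g h, H f -> H g -> H h ->
      ip (fun x => f x + g x) h = ip f h + ip g h;
  rkhs_ip_scal : forall (a : R) f g, H f -> H g ->
      ip (fun x => a * f x) g = a * ip f g;
  rkhs_ip_pos : forall f, H f -> 0 <= ip f f;
  rkhs_ip_def : forall f, H f -> ip f f = 0 -> f = (fun _ => 0);
  rkhs_complete : forall u : nat -> X -> R, (forall n, H (u n)) ->
      (forall eps, 0 < eps -> exists N, forall n m, (N <= n)%nat -> (N <= m)%nat ->
          ip_norm ip (fsub (u n) (u m)) < eps) ->
      exists f, H f /\
        (forall eps, 0 < eps -> exists N, forall n, (N <= n)%nat ->
          ip_norm ip (fsub (u n) f) < eps);
  rkhs_eval_cont : forall x f, H f -> forall eps, 0 < eps ->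
      exists delta, 0 < delta /\
        forall g, H g -> ip_norm ip (fsub g f) < delta -> Rabs (g x - f x) < eps
}.

(* Main.v *)
Require Import Defs.
From Stdlib Require Import Reals Lra Lia List Classical ClassicalEpsilon FunctionalExtensionality Cantor.
Open Scope R_scope.

Lemma choice_gen {A B : Type} (P : A -> B -> Prop) :
  (forall a, exists b, P a b) -> exists u : A -> B, forall a, P a (u a).
Proof.
  intros h. exists (fun a => proj1_sig (constructive_indefinite_description _ (h a))).
  intro a. exact (proj2_sig (constructive_indefinite_description _ (h a))).
Qed.

Lemma fin_or_inf {X : Type} (A : X -> Prop) :
  (exists l : list X, forall x, A x -> In x l) \/
  (exists s : nat -> X, (forall i j, s i = s j -> i = j) /\ forall n, A (s n)).
Proof.
  destruct (classic (exists l : list X, forall x, A x -> In x l)) as [h|h]; [left; exact h|right].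
  assert (hn : forall l : list X, exists x, A x /\ ~ In x l).
  { intro l. apply NNPP. intro c. apply h. exists l. intros x hx.
    apply NNPP. intro c2. apply c. exists x. split; assumption. }
  destruct (choice_gen _ hn) as [next hnext].
  set (L := fix L (n : nat) : list X := match n with O => nil | S n' => next (L n') :: L n' end).
  exists (fun n => next (L n)). split.
  - assert (hin : forall i j, (i < j)%nat -> In (next (L i)) (L j)).
    { intros i j. induction j as [|j IH]; intro hij; [lia|].
      simpl. destruct (Nat.eq_dec i j) as [->|ne]; [left; reflexivity|].
      right. apply IH. lia. }
    intros i j e. destruct (Nat.lt_trichotomy i j) as [lt|[eq|gt]]; auto.
    + exfalso. apply (proj2 (hnext (L j))). rewrite <- e. apply hin; auto.
    + exfalso. apply (proj2 (hnext (L i))). rewrite e. apply hin; auto.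
  - intro n. apply (proj1 (hnext (L n))).
Qed.

Lemma countable_of_fin {X : Type} (B : nat -> X -> Prop) :
  (forall x, exists m, B m x) ->
  (forall m, exists l : list X, forall x, B m x -> In x l) -> countable_type X.
Proof.
  intros hc hf.
  destruct (choice_gen _ hc) as [M hM].
  destruct (choice_gen _ hf) as [L hL].
  assert (hi : forall x, exists i, nth_error (L (M x)) i = Some x).
  { intro x. apply In_nth_error. apply hL. apply hM. }
  destruct (choice_gen _ hi) as [I hI].
  exists (fun x => to_nat (M x, I x)).
  intros x y e. apply to_nat_inj in e. injection e as e1 e2.
  pose proof (hI x) as hx. pose proof (hI y) as hy.
  rewrite e1, e2 in hx. rewrite hx in hy. injection hy; auto.
Qed.

Definition lc {X : Type} (a : R) (f : X -> R) (b : R) (g : X -> R) : X -> R :=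
  fun y => a * f y + b * g y.

Section Alg.
Context {X : Type} {H : (X -> R) -> Prop} {ip : (X -> R) -> (X -> R) -> R}
  (hR : is_RKHS X H ip).

Lemma H_lc a f b g : H f -> H g -> H (lc a f b g).
Proof.
  intros hf hg. unfold lc.
  apply (rkhs_add _ _ _ hR (fun y => a * f y) (fun y => b * g y));
  apply (rkhs_scal _ _ _ hR); assumption.
Qed.

Lemma ip_lc_l a f b g h : H f -> H g -> H h ->
  ip (lc a f b g) h = a * ip f h + b * ip g h.
Proof.
  intros hf hg hh. unfold lc.
  rewrite (rkhs_ip_add _ _ _ hR (fun y => a * f y) (fun y => b * g y)); try (apply (rkhs_scal _ _ _ hR); assumption); auto.
  rewrite (rkhs_ip_scal _ _ _ hR a f h), (rkhs_ip_scal _ _ _ hR b g h); auto.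
Qed.

Lemma ip_lc_r a f b g h : H f -> H g -> H h ->
  ip h (lc a f b g) = a * ip h f + b * ip h g.
Proof.
  intros hf hg hh.
  rewrite (rkhs_ip_sym _ _ _ hR h (lc a f b g)); auto using H_lc.
  rewrite ip_lc_l; auto.
  rewrite (rkhs_ip_sym _ _ _ hR f h), (rkhs_ip_sym _ _ _ hR g h); auto.
Qed.

Lemma Q_lc a f b g : H f -> H g ->
  ip (lc a f b g) (lc a f b g) = a * a * ip f f + 2 * a * b * ip f g + b * b * ip g g.
Proof.
  intros hf hg. rewrite ip_lc_l; auto using H_lc. rewrite !ip_lc_r; auto.
  rewrite (rkhs_ip_sym _ _ _ hR g f); auto. ring.
Qed.

Lemma Q_ge0 f : H f -> 0 <= ip f f.
Proof. apply (rkhs_ip_pos _ _ _ hR). Qed.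

Lemma fsub_lc (f g : X -> R) : fsub f g = lc 1 f (-1) g.
Proof. unfold fsub, lc. apply functional_extensionality. intro; ring. Qed.

Lemma norm_lt (f : X -> R) eps : H f -> 0 < eps ->
  (ip_norm ip f < eps <-> ip f f < eps * eps).
Proof.
  intros hf he. unfold ip_norm. pose proof (Q_ge0 f hf).
  split; intro h.
  - assert (h2 : sqrt (ip f f) * sqrt (ip f f) < eps * eps).
    { pose proof (sqrt_pos (ip f f)). nra. }
    rewrite sqrt_sqrt in h2; auto.
  - rewrite <- (sqrt_square eps); [|lra]. apply sqrt_lt_1; nra.
Qed.


Lemma quad_zero (c A : R) : 0 <= A -> (forall t, 0 <= 2 * t * c + t * t * A) -> c = 0.
Proof.
  intros hA h. set (t := - c / (A + 1)).
  assert (ht : c = - t * (A + 1)) by (unfold t; field; lra).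
  specialize (h t). rewrite ht in h.
  assert (t = 0) by nra. rewrite ht. nra.
Qed.

Lemma riesz (x : X) : H (fun _ => 1) ->
  exists k, H k /\ forall f, H f -> ip f k = f x.
Proof.
  intro h1.
  set (E := fun r => exists g, H g /\ g x = 1 /\ r = - ip g g).
  assert (hb : bound E).
  { exists 0. intros r [g [hg [_ ->]]]. pose proof (Q_ge0 g hg). lra. }
  assert (hne : exists r, E r).
  { exists (- ip (fun _ => 1) (fun _ => 1)). exists (fun _ => 1). auto. }
  destruct (completeness E hb hne) as [L [hub hlub]].
  set (d := - L).
  assert (hlow : forall g, H g -> g x = 1 -> d <= ip g g).
  { intros g hg hgx. assert (E (- ip g g)) by (exists g; auto).
    specialize (hub _ H0). unfold d. lra. }
  assert (hd0 : 0 <= d).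
  { assert (L <= 0). { apply hlub. intros r [g [hg [_ ->]]]. pose proof (Q_ge0 g hg). lra. }
    unfold d; lra. }
  assert (happ : forall eta, 0 < eta -> exists g, H g /\ g x = 1 /\ ip g g < d + eta).
  { intros eta he. apply NNPP. intro c.
    assert (L <= L - eta).
    { apply hlub. intros r [g [hg [hgx ->]]].
      destruct (Rlt_or_le (ip g g) (d + eta)) as [l|l].
      - exfalso. apply c. exists g. auto.
      - unfold d in l. lra. }
    lra. }
  assert (hseq : forall n : nat, exists g, H g /\ g x = 1 /\ ip g g < d + / (INR n + 1)).
  { intro n. apply happ. apply Rinv_0_lt_compat. pose proof (pos_INR n). lra. }
  destruct (choice_gen _ hseq) as [u hu].
  assert (hsmall : forall e, 0 < e -> exists N, forall n, (N <= n)%nat -> / (INR n + 1) < e).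
  { intros e he. destruct (archimed_cor1 e he) as [N [hN hN0]]. exists N. intros n hn.
    apply Rle_lt_trans with (/ INR N); auto.
    apply Rinv_le_contravar. apply lt_0_INR; auto.
    apply le_INR in hn. lra. }
  assert (hcauchy : forall n m, ip (fsub (u n) (u m)) (fsub (u n) (u m))
                       <= 2 * / (INR n + 1) + 2 * / (INR m + 1)).
  { intros n m. destruct (hu n) as [hn [hnx hnq]]. destruct (hu m) as [hm [hmx hmq]].
    rewrite fsub_lc, Q_lc; auto.
    assert (hmid := hlow (lc (1/2) (u n) (1/2) (u m)) (H_lc _ _ _ _ hn hm)).
    rewrite Q_lc in hmid; auto.
    assert (lc (1 / 2) (u n) (1 / 2) (u m) x = 1) by (unfold lc; rewrite hnx, hmx; field).
    specialize (hmid H0). lra. }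
  destruct (rkhs_complete _ _ _ hR u (fun n => proj1 (hu n))) as [g0 [hg0 hconv]].
  { intros eps he. destruct (hsmall (eps * eps / 4)) as [N hN]. { nra. }
    exists N. intros n m hn hm.
    destruct (hu n) as [hun _]. destruct (hu m) as [hum _].
    apply norm_lt; auto. { rewrite fsub_lc. apply H_lc; auto. }
    pose proof (hN n hn). pose proof (hN m hm). pose proof (hcauchy n m). lra. }
  assert (hg0x : g0 x = 1).
  { apply NNPP. intro ne.
    assert (hpos : 0 < Rabs (g0 x - 1)).
    { apply Rabs_pos_lt. intro e. apply ne. lra. }
    destruct (rkhs_eval_cont _ _ _ hR x g0 hg0 _ hpos) as [delta [hdel hd]].
    destruct (hconv delta hdel) as [N hN].
    specialize (hN N (le_n N)).
    destruct (hu N) as [huN [huNx _]].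
    specialize (hd (u N) huN hN). rewrite huNx in hd.
    rewrite Rabs_minus_sym in hd. lra. }
  assert (hQg0 : ip g0 g0 <= d).
  { apply Rnot_lt_le. intro lt. set (eta := ip g0 g0 - d).
    assert (heta : 0 < eta) by (unfold eta; lra).
    destruct (hsmall (eta / 4)) as [N1 hN1]. { lra. }
    destruct (hconv (sqrt (eta / 4))) as [N2 hN2]. { apply sqrt_lt_R0. lra. }
    set (n := (N1 + N2)%nat).
    specialize (hN1 n ltac:(unfold n; lia)). specialize (hN2 n ltac:(unfold n; lia)).
    destruct (hu n) as [hun [hunx hunq]].
    apply norm_lt in hN2; auto. 2: { rewrite fsub_lc. apply H_lc; auto. } 2: { apply sqrt_lt_R0. lra. }
    rewrite sqrt_sqrt in hN2 by lra.
    rewrite fsub_lc, Q_lc in hN2; auto.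
    assert (h2 := hlow (lc 2 (u n) (-1) g0) (H_lc _ _ _ _ hun hg0)).
    rewrite Q_lc in h2; auto.
    assert (lc 2 (u n) (-1) g0 x = 1) by (unfold lc; rewrite hunx, hg0x; ring).
    specialize (h2 H0). unfold eta in *. lra. }
  assert (hQpos : 0 < ip g0 g0).
  { destruct (Rle_lt_or_eq_dec 0 (ip g0 g0) (Q_ge0 g0 hg0)) as [l|e]; auto.
    exfalso. symmetry in e. apply (rkhs_ip_def _ _ _ hR g0 hg0) in e.
    rewrite e in hg0x. lra. }
  assert (horth : forall h, H h -> h x = 0 -> ip g0 h = 0).
  { intros h hh hhx. apply (quad_zero _ (ip h h) (Q_ge0 h hh)). intro t.
    assert (h3 := hlow (lc 1 g0 t h) (H_lc _ _ _ _ hg0 hh)).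
    rewrite Q_lc in h3; auto.
    assert (lc 1 g0 t h x = 1) by (unfold lc; rewrite hg0x, hhx; ring).
    specialize (h3 H0). lra. }
  exists (lc (/ ip g0 g0) g0 0 g0). split; [apply H_lc; auto|].
  intros f hf.
  assert (e := horth (lc 1 f (- f x) g0) (H_lc _ _ _ _ hf hg0)).
  rewrite ip_lc_r in e; auto.
  assert (lc 1 f (- f x) g0 x = 0) by (unfold lc; rewrite hg0x; ring).
  specialize (e H0).
  rewrite ip_lc_r; auto.
  rewrite (rkhs_ip_sym _ _ _ hR g0 f) in e; auto.
  assert (ee : ip f g0 = f x * ip g0 g0) by lra.
  rewrite ee. field. lra.
Qed.

Lemma ip_zero_l g : H g -> ip (fun _ => 0) g = 0.
Proof.
  intro hg.
  replace (fun _ : X => 0) with (fun y : X => 0 * g y) by (apply functional_extensionality; intro; ring).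
  rewrite (rkhs_ip_scal _ _ _ hR); auto. ring.
Qed.

End Alg.

Definition epsg {X : Type} (ip : (X -> R) -> (X -> R) -> R) (k : nat -> X -> R)
  (g : X -> R) (n : nat) : R :=
  if Rle_dec 0 (ip g (k n)) then -1 else 1.

Fixpoint Sq {X : Type} (ip : (X -> R) -> (X -> R) -> R) (k : nat -> X -> R) (n : nat) : X -> R :=
  match n with
  | O => fun _ => 0
  | S n' => lc 1 (Sq ip k n') (epsg ip k (Sq ip k n') n') (k n')
  end.

Definition ep {X : Type} (ip : (X -> R) -> (X -> R) -> R) (k : nat -> X -> R) (n : nat) : R :=
  epsg ip k (Sq ip k n) n.

Lemma ep_sq {X : Type} ip (k : nat -> X -> R) n : ep ip k n * ep ip k n = 1.
Proof. unfold ep, epsg. destruct (Rle_dec _ _); ring. Qed.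

Lemma ep_abs {X : Type} ip (k : nat -> X -> R) n : Rabs (ep ip k n) <= 1.
Proof. unfold ep, epsg. destruct (Rle_dec _ _); unfold Rabs; destruct (Rcase_abs _); lra. Qed.

Theorem theorem2 (X : Type) (hX : ~ countable_type X) :
  ~ (exists (H : (X -> R) -> Prop) (ip : (X -> R) -> (X -> R) -> R),
       is_RKHS X H ip /\ (forall f : X -> R, bounded_fun f -> H f)).
Proof.
  intros [H [ip [hR hsub]]].
  assert (h1 : H (fun _ => 1)).
  { apply hsub. exists 1. intro. rewrite Rabs_R1. lra. }
  assert (hK : forall x, exists k, H k /\ forall f, H f -> ip f k = f x).
  { intro x. apply (riesz hR x h1). }
  destruct (choice_gen _ hK) as [K hKp].
  set (B := fun (m : nat) (x : X) => ip (K x) (K x) <= INR m).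
  destruct (classic (exists m, exists s : nat -> X, (forall i j, s i = s j -> i = j) /\ forall n, B m (s n)))
    as [[m [s [hinj hB]]] | hno].
  2: { apply hX. apply (countable_of_fin B).
       - intro x. destruct (INR_unbounded (ip (K x) (K x))) as [m hm]. exists m. unfold B. lra.
       - intro m. destruct (fin_or_inf (B m)) as [h|h]; auto.
         exfalso. apply hno. exists m. exact h. }
  set (M := INR m + 1).
  assert (hM : 0 < M) by (unfold M; pose proof (pos_INR m); lra).
  set (k := fun n => K (s n)).
  assert (hk : forall n, H (k n)) by (intro n; apply (hKp (s n))).
  assert (hkQ : forall n, ip (k n) (k n) <= M) by (intro n; pose proof (hB n); unfold B, M, k in *; lra).
  assert (hS : forall n, H (Sq ip k n)).
  { induction n; simpl. apply (rkhs_zero _ _ _ hR). apply (H_lc hR); auto. }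
  assert (hSQ : forall n, ip (Sq ip k n) (Sq ip k n) <= INR n * M).
  { induction n. { simpl. rewrite (ip_zero_l hR); [lra|apply (rkhs_zero _ _ _ hR)]. }
    simpl Sq. rewrite (Q_lc hR); auto. rewrite S_INR.
    pose proof (hkQ n).
    assert (he : epsg ip k (Sq ip k n) n * ip (Sq ip k n) (k n) <= 0).
    { unfold epsg. destruct (Rle_dec _ _); lra. }
    pose proof (ep_sq ip k n). unfold ep in *. nra. }
  set (f := fun y => match excluded_middle_informative (exists i, s i = y) with
                     | left h => ep ip k (proj1_sig (constructive_indefinite_description _ h))
                     | right _ => 0 end).
  assert (hfs : forall j, f (s j) = ep ip k j).
  { intro j. unfold f. destruct (excluded_middle_informative _) as [h|h].
    - destruct (constructive_indefinite_description _ h) as [i hi]. simpl.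
      rewrite (hinj _ _ hi). reflexivity.
    - exfalso. apply h. exists j. reflexivity. }
  assert (hf : H f).
  { apply hsub. exists 1. intro y. unfold f. destruct (excluded_middle_informative _).
    - apply ep_abs.
    - rewrite Rabs_R0. lra. }
  assert (hip : forall n, ip f (Sq ip k n) = INR n).
  { induction n.
    - simpl. rewrite (rkhs_ip_sym _ _ _ hR); auto; try apply (rkhs_zero _ _ _ hR).
      rewrite (ip_zero_l hR); auto.
    - simpl Sq. rewrite (ip_lc_r hR); auto. rewrite IHn, S_INR.
      unfold k at 2. rewrite (proj2 (hKp (s n))); auto. fold k. rewrite hfs.
      pose proof (ep_sq ip k n). unfold ep in *. lra. }
  destruct (INR_unbounded (M * ip f f)) as [n hn].
  pose proof (Q_ge0 hR _ (H_lc hR M f (-1) (Sq ip k n) hf (hS n))) as hq.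
  rewrite (Q_lc hR) in hq; auto. rewrite hip in hq.
  pose proof (hSQ n). pose proof (pos_INR n).
  assert (M * (M * ip f f - INR n) >= 0) by nra.
  nra.
Qed.
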